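(* Let $n\ge 1$ and let $\mathcal F_{Acaa}(X_1,\dots,X_n)=\bigoplus_{k\ge1}\mathcal F^k_{Acaa}(X_1,\dots,X_n)$ be the free Acaa-algebra over a field $\mathbb K$ of characteristic $0$ on generators $X_1,\dots,X_n$, graded by degree in the generators. Then: $\mathcal F^1_{Acaa}$ is spanned by $X_1,\dots,X_n$; $\mathcal F^2_{Acaa}$ is spanned by the elements $[X_i,X_j]$ with $1\le i<j\le n$; $\mathcal F^3_{Acaa}$ is spanned by the elements $[X_i,[X_j,X_k]]$ with $1\le i<j<k\le n$; and $\mathcal F^k_{Acaa}(X_1,\dots,X_n)=0$ for all $k\ge 4$.
   Context: An Acaa-algebra over a field $\mathbb K$ of characteristic $0$ is a $\mathbb K$-vector space $A$ with a bilinear product $[\cdot,\cdot]$ which is anticommutative, $[x,y]=-[y,x]$, and satisfies $[x_1,[x_2,x_3]]=[x_2,[x_3,x_1]]$ for all $x_1,x_2,x_3\in A$. The free Acaa-algebra on $X_1,\dots,X_n$ is the quotient of the free nonassociative algebra on $X_1,\dots,X_n$ by the ideal generated by these identities; it is graded by the number of generators in a monomial, $\mathcal F^k_{Acaa}$ denoting the degree-$k$ homogeneous component. *)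

(* Defs.v *)
From mathcomp Require Import all_boot all_algebra.
Set Implicit Arguments. Unset Strict Implicit. Unset Printing Implicit Defensive.
Import GRing.Theory.
Local Open Scope ring_scope.

Section AcaaFree.
Variables (K : fieldType) (n : nat).

Inductive term : Type :=
| TGen : 'I_n -> term
| TZero : term
| TAdd : term -> term -> term
| TScale : K -> term -> term
| TMul : term -> term -> term.

(* The congruence defining the free Acaa-algebra: the K-vector-space axioms,
   bilinearity of the product (giving the free nonassociative algebra),
   plus all substitution instances of the Acaa identities
   [x,y] = -[y,x]  and  [x1,[x2,x3]] = [x2,[x3,x1]]. The free Acaa-algebra
   is term / acaa_eqv. *)
Inductive acaa_eqv : term -> term -> Prop :=
| ae_refl t : acaa_eqv t t
| ae_sym t u : acaa_eqv t u -> acaa_eqv u t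
| ae_trans t u v : acaa_eqv t u -> acaa_eqv u v -> acaa_eqv t v
| ae_add t t' u u' : acaa_eqv t t' -> acaa_eqv u u' -> acaa_eqv (TAdd t u) (TAdd t' u')
| ae_scale a t t' : acaa_eqv t t' -> acaa_eqv (TScale a t) (TScale a t')
| ae_mul t t' u u' : acaa_eqv t t' -> acaa_eqv u u' -> acaa_eqv (TMul t u) (TMul t' u')
| ae_addA t u v : acaa_eqv (TAdd t (TAdd u v)) (TAdd (TAdd t u) v)
| ae_addC t u : acaa_eqv (TAdd t u) (TAdd u t)
| ae_add0 t : acaa_eqv (TAdd t TZero) t
| ae_scale1 t : acaa_eqv (TScale 1 t) t
| ae_scale0 t : acaa_eqv (TScale 0 t) TZero
| ae_scaleA a b t : acaa_eqv (TScale a (TScale b t)) (TScale (a * b) t)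
| ae_scaleDl a b t : acaa_eqv (TScale (a + b) t) (TAdd (TScale a t) (TScale b t))
| ae_scaleDr a t u : acaa_eqv (TScale a (TAdd t u)) (TAdd (TScale a t) (TScale a u))
| ae_mulDl t u v : acaa_eqv (TMul (TAdd t u) v) (TAdd (TMul t v) (TMul u v))
| ae_mulDr t u v : acaa_eqv (TMul t (TAdd u v)) (TAdd (TMul t u) (TMul t v))
| ae_mulZl a t u : acaa_eqv (TMul (TScale a t) u) (TScale a (TMul t u))
| ae_mulZr a t u : acaa_eqv (TMul t (TScale a u)) (TScale a (TMul t u))
| ae_anticomm x y : acaa_eqv (TMul x y) (TScale (-1) (TMul y x))
| ae_cyclic x1 x2 x3 :
    acaa_eqv (TMul x1 (TMul x2 x3)) (TMul x2 (TMul x3 x1)).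

Inductive mon : Type :=
| MGen : 'I_n -> mon
| MMul : mon -> mon -> mon.

Fixpoint mdeg (m : mon) : nat :=
  match m with MGen _ => 1%N | MMul a b => (mdeg a + mdeg b)%N end.

Fixpoint mon_term (m : mon) : term :=
  match m with MGen i => TGen i | MMul a b => TMul (mon_term a) (mon_term b) end.

End AcaaFree.

Arguments TZero {K n}.

(* Main.v *)
Require Import Defs.
From mathcomp Require Import all_boot all_algebra.
From Stdlib Require Import Setoid Morphisms.
From mathcomp Require Import zify.
Local Open Scope ring_scope.
Import GRing.Theory.
Lemma two_nz (K : fieldType) (hK : [pchar K] =i pred0) : (1 + 1 : K) != 0.
Proof. have := hK 2%N. rewrite !inE /=. by move=> /negbT. Qed.
Section S.
Variables (K : fieldType) (n : nat).
Local Notation T := (term K n).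
Local Notation "a =a= b" := (@acaa_eqv K n a b) (at level 70).
#[global] Instance eqv_Equiv : Equivalence (@acaa_eqv K n).
Proof. split; [exact: ae_refl|exact: ae_sym|exact: ae_trans]. Qed.
#[global] Instance add_Proper : Proper (@acaa_eqv K n ==> @acaa_eqv K n ==> @acaa_eqv K n) (@TAdd K n).
Proof. move=> ? ? ? ? ? ?; exact: ae_add. Qed.
#[global] Instance mul_Proper : Proper (@acaa_eqv K n ==> @acaa_eqv K n ==> @acaa_eqv K n) (@TMul K n).
Proof. move=> ? ? ? ? ? ?; exact: ae_mul. Qed.
#[global] Instance scale_Proper a : Proper (@acaa_eqv K n ==> @acaa_eqv K n) (@TScale K n a).
Proof. move=> ? ? ?; exact: ae_scale. Qed.

Lemma scale_zero a : TScale a (TZero : T) =a= TZero.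
Proof.
setoid_rewrite <- (ae_scale0 (TZero : T)) at 1.
setoid_rewrite ae_scaleA. rewrite mulr0. exact: ae_scale0.
Qed.
Lemma mul0l (t : T) : TMul TZero t =a= TZero.
Proof.
setoid_rewrite <- (ae_scale0 (TZero : T)) at 1.
setoid_rewrite ae_mulZl. exact: ae_scale0.
Qed.
Lemma mul0r (t : T) : TMul t TZero =a= TZero.
Proof.
setoid_rewrite <- (ae_scale0 (TZero : T)) at 1.
setoid_rewrite ae_mulZr. exact: ae_scale0.
Qed.
Lemma add0l (t : T) : TAdd TZero t =a= t.
Proof. setoid_rewrite ae_addC. exact: ae_add0. Qed.
Lemma scaleM a b (t : T) : TScale a (TScale b t) =a= TScale (a * b) t.
Proof. exact: ae_scaleA. Qed.
Lemma negneg (t : T) : TScale (-1) (TScale (-1) t) =a= t.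
Proof. setoid_rewrite scaleM. rewrite mulrNN mulr1. exact: ae_scale1. Qed.
Lemma neg_inj (t u : T) : TScale (-1) t =a= TScale (-1) u -> t =a= u.
Proof. move=> h. setoid_rewrite <- (negneg t). setoid_rewrite h. exact: negneg. Qed.
Lemma neg_zero (t : T) : (1 + 1 : K) != 0 -> t =a= TScale (-1) t -> t =a= TZero.
Proof.
move=> h2 h.
have e : TScale (1 + 1) t =a= TZero.
  setoid_rewrite ae_scaleDl. setoid_rewrite ae_scale1 at 2.
  setoid_rewrite h at 2. setoid_rewrite <- ae_scaleDl. rewrite subrr. exact: ae_scale0.
setoid_rewrite <- (ae_scale1 t). rewrite -(mulVf h2).
setoid_rewrite <- scaleM. setoid_rewrite e. exact: scale_zero.
Qed.
Hypothesis h2 : (1 + 1 : K) != 0.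
Definition P4 (x y z w : T) := TMul (TMul x y) (TMul z w).
Lemma L1 (x y W : T) : TMul x (TMul y W) =a= TScale (-1) (TMul (TMul x y) W).
Proof.
setoid_rewrite ae_cyclic. setoid_rewrite ae_cyclic. exact: ae_anticomm.
Qed.
Lemma rot x y z w : P4 x y z w =a= P4 x z w y.
Proof.
apply: neg_inj. rewrite /P4. setoid_rewrite <- L1.
apply: ae_mul; first reflexivity. exact: ae_cyclic.
Qed.
Lemma anti1 x y z w : P4 x y z w =a= TScale (-1) (P4 y x z w).
Proof. rewrite /P4. setoid_rewrite ae_anticomm at 2. exact: ae_mulZl. Qed.
Lemma P4_zero x y z w : P4 x y z w =a= TZero.
Proof.
apply: neg_zero => //.
have e1 : P4 x y z w =a= P4 z w x y.
  transitivity (P4 x w y z); first by rewrite -> rot; exact: rot.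
  transitivity (TScale (-1) (P4 w x y z)); first exact: anti1.
  transitivity (TScale (-1) (P4 w z x y)).
    apply: ae_scale. rewrite -> rot; exact: rot.
  setoid_rewrite (anti1 w). exact: negneg.
setoid_rewrite e1 at 2. rewrite /P4. exact: ae_anticomm.
Qed.
Lemma K1 (x y z w : T) : TMul x (TMul y (TMul z w)) =a= TZero.
Proof. setoid_rewrite L1. setoid_rewrite P4_zero. exact: scale_zero. Qed.
Lemma big_zero (I : Type) (r : seq I) (P : pred I) (F : I -> T) :
  (forall i, P i -> F i =a= TZero) -> \big[@TAdd K n/TZero]_(i <- r | P i) F i =a= TZero.
Proof.
move=> h; elim: r => [|x r IH]; first by rewrite big_nil; reflexivity.
rewrite big_cons. case: ifP => Px; last exact: IH.
setoid_rewrite (h x Px). setoid_rewrite IH. exact: ae_add0.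
Qed.
Lemma big_zero_in (I : eqType) (r : seq I) (P : pred I) (F : I -> T) :
  (forall i, i \in r -> P i -> F i =a= TZero) -> \big[@TAdd K n/TZero]_(i <- r | P i) F i =a= TZero.
Proof.
elim: r => [|x r IH] h; first by rewrite big_nil; reflexivity.
rewrite big_cons. have IH' := IH (fun i ir => h i (@mem_behead _ (x :: r) i ir)).
case: ifP => Px; last exact: IH'.
setoid_rewrite (h x (mem_head _ _) Px). setoid_rewrite IH'. exact: ae_add0.
Qed.
Lemma big_single (I : eqType) (r : seq I) (P : pred I) (F : I -> T) i0 :
  uniq r -> i0 \in r -> P i0 -> (forall i, i != i0 -> P i -> F i =a= TZero) ->
  \big[@TAdd K n/TZero]_(i <- r | P i) F i =a= F i0.
Proof.
move=> + + Pi0 h; elim: r => [|x r IH] //= /andP[xr ur].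
rewrite inE big_cons => /orP[/eqP ex|ir].
  subst x. rewrite Pi0. setoid_rewrite big_zero_in; first exact: ae_add0.
  move=> i ir Pi; apply: h => //. by apply: contraNneq xr => <-.
have nx : x != i0 by apply: contraNneq xr => ->.
case: ifP => Px; last exact: IH.
setoid_rewrite (h x nx Px). setoid_rewrite add0l. exact: IH.
Qed.
Lemma big_single_ord (P : pred 'I_n) (F : 'I_n -> T) i0 :
  P i0 -> (forall i, i != i0 -> P i -> F i =a= TZero) ->
  \big[@TAdd K n/TZero]_(i < n | P i) F i =a= F i0.
Proof. move=> ??. have := (@big_single _ (index_enum 'I_n) P F i0 (index_enum_uniq _) (mem_index_enum _)). by move=> H; apply: H. Qed.
Lemma scale0t (t : T) a : a = 0 -> TScale a t =a= TZero.
Proof. move=> ->; exact: ae_scale0. Qed.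

Lemma span2 (a b : 'I_n) s : (a < b)%N -> exists c : 'I_n -> 'I_n -> K,
  TScale s (TMul (TGen K a) (TGen K b)) =a=
   \big[@TAdd K n/TZero]_(i < n) \big[@TAdd K n/TZero]_(j < n | (i < j)%N)
             TScale (c i j) (TMul (TGen K i) (TGen K j)).
Proof.
move=> ab; exists (fun i j => if (i == a) && (j == b) then s else 0).
symmetry. setoid_rewrite (@big_single_ord xpredT _ a) => //.
  setoid_rewrite (@big_single_ord (fun j => a < j)%N _ b) => //.
    by rewrite !eqxx; reflexivity.
  by move=> j /negbTE -> _; apply: scale0t; rewrite andbF.
move=> i /negbTE ia _; apply: big_zero => j _; apply: scale0t; by rewrite ia.
Qed.

Lemma span3 (a b d : 'I_n) s : (a < b)%N -> (b < d)%N -> exists c : 'I_n -> 'I_n -> 'I_n -> K,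
  TScale s (TMul (TGen K a) (TMul (TGen K b) (TGen K d))) =a=
         (\big[@TAdd K n/TZero]_(i < n) \big[@TAdd K n/TZero]_(j < n | (i < j)%N)
            \big[@TAdd K n/TZero]_(k < n | (j < k)%N)
             TScale (c i j k) (TMul (TGen K i) (TMul (TGen K j) (TGen K k)))).
Proof.
move=> ab bd; exists (fun i j k => if [&& i == a, j == b & k == d] then s else 0).
symmetry. setoid_rewrite (@big_single_ord xpredT _ a) => //.
  setoid_rewrite (@big_single_ord (fun j => a < j)%N _ b) => //.
    setoid_rewrite (@big_single_ord (fun j => b < j)%N _ d) => //.
      by rewrite !eqxx; reflexivity.
    by move=> j /negbTE -> _; apply: scale0t; rewrite !eqxx.
  move=> j /negbTE jb _; apply: big_zero => k _; apply: scale0t; by rewrite jb andbF.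
move=> i /negbTE ia _; apply: big_zero => j _; apply: big_zero => k _; apply: scale0t; by rewrite ia.
Qed.
Lemma gen_sq (a : 'I_n) : TMul (TGen K a) (TGen K a) =a= TZero.
Proof. apply: neg_zero => //; exact: ae_anticomm. Qed.

Lemma span2' (a b : 'I_n) s : exists c : 'I_n -> 'I_n -> K,
  TScale s (TMul (TGen K a) (TGen K b)) =a=
   \big[@TAdd K n/TZero]_(i < n) \big[@TAdd K n/TZero]_(j < n | (i < j)%N)
             TScale (c i j) (TMul (TGen K i) (TGen K j)).
Proof.
case: (ltngtP a b) => [ab|ba|/val_inj e]; first exact: span2.
  have [c hc] := span2 b a (s * -1) ba. exists c. setoid_rewrite <- hc.
  setoid_rewrite <- scaleM. apply: ae_scale. exact: ae_anticomm.
subst b; exists (fun _ _ => 0). setoid_rewrite gen_sq. setoid_rewrite scale_zero.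
symmetry; apply: big_zero => i _; apply: big_zero => j _; exact: ae_scale0.
Qed.

Definition A3 (a b d : 'I_n) := TMul (TGen K a) (TMul (TGen K b) (TGen K d)).
Definition S3 a b d := forall s, exists c : 'I_n -> 'I_n -> 'I_n -> K,
  TScale s (A3 a b d) =a=
         (\big[@TAdd K n/TZero]_(i < n) \big[@TAdd K n/TZero]_(j < n | (i < j)%N)
            \big[@TAdd K n/TZero]_(k < n | (j < k)%N)
             TScale (c i j k) (TMul (TGen K i) (TMul (TGen K j) (TGen K k)))).
Lemma S3_tr a b d a' b' d' t : A3 a b d =a= TScale t (A3 a' b' d') -> S3 a' b' d' -> S3 a b d.
Proof.
move=> e h s; have [c hc] := h (s * t); exists c. setoid_rewrite <- hc.
setoid_rewrite e. exact: scaleM.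
Qed.
Lemma S3_zero a b d : A3 a b d =a= TZero -> S3 a b d.
Proof.
move=> e s; exists (fun _ _ _ => 0). setoid_rewrite e. setoid_rewrite scale_zero.
symmetry; apply: big_zero => i _; apply: big_zero => j _; apply: big_zero => k _; exact: ae_scale0.
Qed.
Lemma A3_sw a b d : A3 a b d =a= TScale (-1) (A3 a d b).
Proof. rewrite /A3. transitivity (TMul (TGen K a) (TScale (-1) (TMul (TGen K d) (TGen K b)))); [apply: ae_mul; [reflexivity | exact: ae_anticomm] | exact: ae_mulZr]. Qed.
Lemma A3_cyc a b d : A3 a b d =a= TScale 1 (A3 b d a).
Proof. setoid_rewrite ae_scale1. exact: ae_cyclic. Qed.
Lemma S3_sw a b d : S3 a d b -> S3 a b d.
Proof. exact: S3_tr (A3_sw a b d). Qed.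
Lemma S3_cyc a b d : S3 b d a -> S3 a b d.
Proof. exact: S3_tr (A3_cyc a b d). Qed.
Lemma S3_base (a b d : 'I_n) : (a < b)%N -> (b < d)%N -> S3 a b d.
Proof. move=> ab bd s; exact: span3. Qed.
Lemma A3_aad a d : A3 a a d =a= TZero.
Proof.
apply: neg_zero => //. setoid_rewrite (A3_cyc a a d) at 1. setoid_rewrite ae_scale1.
exact: A3_sw.
Qed.
Lemma A3_abb a b : A3 a b b =a= TZero.
Proof. rewrite /A3. setoid_rewrite gen_sq. exact: mul0r. Qed.
Lemma S3_all a b d : S3 a b d.
Proof.
case: (ltngtP a b) => [ab|ba|/val_inj e]; last first.
  by subst b; apply: S3_zero; apply: A3_aad.
all: case: (ltngtP b d) => [bd|db|/val_inj e]; last first;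
  try by (subst d; apply: S3_zero; apply: A3_abb).
all: case: (ltngtP a d) => [ad|da|/val_inj e]; last first;
  try by (subst d; apply: S3_cyc; apply: S3_cyc; apply: S3_zero; apply: A3_aad).
all: first [ by apply: S3_base
           | by apply: S3_sw; apply: S3_base
           | by apply: S3_cyc; apply: S3_sw; apply: S3_base
           | by apply: S3_cyc; apply: S3_base
           | by apply: S3_cyc; apply: S3_cyc; apply: S3_base
           | by apply: S3_cyc; apply: S3_cyc; apply: S3_sw; apply: S3_base
           | exfalso; lia ].
Qed.
Lemma mdeg_pos (m : mon n) : (0 < mdeg m)%N.
Proof. elim: m => //= u IH v _; rewrite addn_gt0 IH. done. Qed.
Lemma deg1 (m : mon n) : mdeg m = 1%N -> exists i, m = MGen i.
Proof. case: m => [i|u v] /=; first by exists i. have := mdeg_pos u; have := mdeg_pos v; lia. Qed.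
Lemma deg2 (m : mon n) : mdeg m = 2%N -> exists a b, m = MMul (MGen a) (MGen b).
Proof.
case: m => [i|u v] //= e. have := mdeg_pos u; have := mdeg_pos v => pv pu.
have [a ->] := deg1 u ltac:(lia). have [b ->] := deg1 v ltac:(lia). by exists a, b.
Qed.
Lemma deg3 (m : mon n) : mdeg m = 3%N ->
  (exists a b d, m = MMul (MGen a) (MMul (MGen b) (MGen d))) \/
  (exists a b d, m = MMul (MMul (MGen a) (MGen b)) (MGen d)).
Proof.
case: m => [i|u v] //= e. have := mdeg_pos u; have := mdeg_pos v => pv pu.
have [h|h] : mdeg u = 1%N \/ mdeg u = 2%N by lia.
  left. have [a ->] := deg1 u h. have [b [d ->]] := deg2 v ltac:(lia). by exists a, b, d.
right. have [a [b ->]] := deg2 u h. have [d ->] := deg1 v ltac:(lia). by exists a, b, d.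
Qed.
Lemma Z3 (v : mon n) (t : T) : mdeg v = 3%N -> TMul t (mon_term K v) =a= TZero.
Proof.
case/deg3 => [[a [b [d ->]]]|[a [b [d ->]]]] /=; first exact: K1.
transitivity (TMul t (TScale (-1) (TMul (TGen K d) (TMul (TGen K a) (TGen K b))))).
  apply: ae_mul; [reflexivity | exact: ae_anticomm].
setoid_rewrite ae_mulZr. setoid_rewrite K1. exact: scale_zero.
Qed.
Lemma deg4 (m : mon n) : (4 <= mdeg m)%N -> mon_term K m =a= TZero.
Proof.
elim: m => [i|u IHu v IHv] //= h.
have := mdeg_pos u; have := mdeg_pos v => pv pu.
case: (leqP 4 (mdeg u)) => hu.
  setoid_rewrite (IHu hu). exact: mul0l.
case: (leqP 4 (mdeg v)) => hv.
  setoid_rewrite (IHv hv). exact: mul0r.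
have [e|[e|[e1 e2]]] : mdeg v = 3%N \/ mdeg u = 3%N \/ (mdeg u = 2%N /\ mdeg v = 2%N) by lia.
- exact: Z3.
- setoid_rewrite ae_anticomm. setoid_rewrite (Z3 _ _ e). exact: scale_zero.
- have [a [b ->]] := deg2 _ e1. have [c [d ->]] := deg2 _ e2. exact: P4_zero.
Qed.
End S.

Theorem mainTheorem6 (K : fieldType) (hK : [pchar K] =i pred0) (n : nat) (hn : (0 < n)%N) :
  (forall m : mon n, mdeg m = 1%N ->
     exists c : 'I_n -> K,
       acaa_eqv (mon_term K m)
         (\big[@TAdd K n/TZero]_(i < n) TScale (c i) (TGen K i)))
  /\ (forall m : mon n, mdeg m = 2%N ->
     exists c : 'I_n -> 'I_n -> K,
       acaa_eqv (mon_term K m)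
         (\big[@TAdd K n/TZero]_(i < n) \big[@TAdd K n/TZero]_(j < n | (i < j)%N)
             TScale (c i j) (TMul (TGen K i) (TGen K j))))
  /\ (forall m : mon n, mdeg m = 3%N ->
     exists c : 'I_n -> 'I_n -> 'I_n -> K,
       acaa_eqv (mon_term K m)
         (\big[@TAdd K n/TZero]_(i < n) \big[@TAdd K n/TZero]_(j < n | (i < j)%N)
            \big[@TAdd K n/TZero]_(k < n | (j < k)%N)
             TScale (c i j k) (TMul (TGen K i) (TMul (TGen K j) (TGen K k)))))
  /\ (forall m : mon n, (4 <= mdeg m)%N -> acaa_eqv (mon_term K m) TZero).
Proof.
have h2 := @two_nz K hK.
split; [|split; [|split]].
- move=> m /(@deg1 K n h2 m) [i ->] /=. exists (fun j => if j == i then 1 else 0).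
  symmetry. setoid_rewrite (@big_single_ord K n xpredT _ i) => //.
    rewrite eqxx. exact: ae_scale1.
  move=> j /negbTE -> _; exact: ae_scale0.
- move=> m /(@deg2 K n h2 m) [a [b ->]] /=. have [c hc] := @span2' _ _ h2 a b 1. exists c.
  setoid_rewrite <- hc. symmetry; exact: ae_scale1.
- move=> m /(@deg3 K n h2 m) [[a [b [d ->]]]|[a [b [d ->]]]] /=.
    have [c hc] := @S3_all _ _ h2 a b d 1. exists c. setoid_rewrite <- hc. symmetry; exact: ae_scale1.
  have [c hc] := @S3_all _ _ h2 d a b (-1). exists c. setoid_rewrite <- hc. exact: ae_anticomm.
- move=> m; exact: (@deg4 _ _ h2).
Qed.
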